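(* Let $\kappa$ be a regular uncountable cardinal and assume $\kappa^{<\kappa}=\kappa$. If $(L,<_L)$ is a linear order of cardinality $>\kappa$, then Player I has a winning strategy in the game $G_\kappa(L)$. Hence, under $\kappa^{<\kappa}=\kappa$, the game $G_\kappa(L)$ is determined for every linear order $L$.
   Context: For a partial order $(A,\le)$, $X\subseteq A$ is cofinal (coinitial) in $A$ if for every $a\in A$ there is $x\in X$ with $a\le x$ ($a\ge x$); $\mathrm{cf}\,A$ ($\mathrm{ci}\,A$) is the least cardinality of a cofinal (coinitial) subset. For $R\subseteq A$ and $a\in A$ put $R\downarrow a=\{x\in R: x\le a\}$ and $R\uparrow a=\{x\in R: a\le x\}$. $R$ is a $\kappa$-subset of $A$, written $R\le_\kappa A$, if for every $a\in A$, $\mathrm{cf}(R\downarrow a)<\kappa$ and $\mathrm{ci}(R\uparrow a)<\kappa$. The game $G_\kappa(A)$: Players I and II alternately choose subsets $x_\alpha$ (by I) and $y_\alpha$ (by II) of $A$ for $\alpha<\kappa$ (in the order $x_0,y_0,x_1,y_1,\dots$), each of size $<\kappa$, such that $x_\alpha\subseteq y_\alpha$ and $\bigcup_{\nu<\alpha}y_\nu\subseteq x_\alpha$. Player II wins the play iff $R=\bigcup_{\alpha<\kappa}x_\alpha=\bigcup_{\alpha<\kappa}y_\alpha$ satisfies $R\le_\kappa A$; otherwise Player I wins. The game is determined if one of the players has a winning strategy. *)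

(* Defs.v *)
(* Sets are predicates [A -> Prop].
   The cardinal kappa is represented by a type K with a strict well-order
   [ltK] which is an initial ordinal (von Neumann cardinal). *)

Set Implicit Arguments.

Definition strict_well_order (K : Type) (ltK : K -> K -> Prop) : Prop :=
  (forall a, ~ ltK a a) /\
  (forall a b c, ltK a b -> ltK b c -> ltK a c) /\
  (forall a b, ltK a b \/ a = b \/ ltK b a) /\
  well_founded ltK.

(* |S| < kappa : S injects into a proper initial segment {beta | beta < alpha}
   of kappa (for a cardinal kappa this is exactly |S| < kappa) *)
Definition small (K : Type) (ltK : K -> K -> Prop) (A : Type) (S : A -> Prop)
  : Prop :=
  exists (alpha : K) (f : A -> K),
    (forall x y, S x -> S y -> f x = f y -> x = y) /\
    (forall x, S x -> ltK (f x) alpha).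

Definition regular_uncountable_cardinal (K : Type) (ltK : K -> K -> Prop)
  : Prop :=
  strict_well_order ltK /\
  (* cardinal: K is not equinumerous to (does not inject into) a smaller ordinal *)
  ~ small ltK (fun _ : K => True) /\
  ~ (exists f : K -> nat, forall a b, f a = f b -> a = b) /\
  (forall S : K -> Prop, small ltK S -> exists alpha, forall beta, S beta -> ltK beta alpha).

(* kappa^{<kappa} = kappa : the set {(alpha, f) | alpha < kappa, f : alpha -> kappa}
   injects into kappa (the reverse inequality is trivial).  A function on the
   segment alpha is represented by any f : K -> K, two being identified when they
   agree below alpha. *)
Definition kappa_lt_kappa_eq_kappa (K : Type) (ltK : K -> K -> Prop) : Prop :=
  exists e : K -> (K -> K) -> K,
    forall alpha alpha' f f',
      e alpha f = e alpha' f' ->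
      alpha = alpha' /\ (forall beta, ltK beta alpha -> f beta = f' beta).

Definition linear_order (L : Type) (le : L -> L -> Prop) : Prop :=
  (forall x, le x x) /\
  (forall x y, le x y -> le y x -> x = y) /\
  (forall x y z, le x y -> le y z -> le x z) /\
  (forall x y, le x y \/ le y x).

Section Orders.
Variables (K : Type) (ltK : K -> K -> Prop) (A : Type) (le : A -> A -> Prop).

Definition cofinal_in (B X : A -> Prop) : Prop :=
  (forall x, X x -> B x) /\ (forall b, B b -> exists x, X x /\ le b x).
Definition coinitial_in (B X : A -> Prop) : Prop :=
  (forall x, X x -> B x) /\ (forall b, B b -> exists x, X x /\ le x b).

Definition down (R : A -> Prop) (a : A) : A -> Prop := fun x => R x /\ le x a.
Definition up (R : A -> Prop) (a : A) : A -> Prop := fun x => R x /\ le a x.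

Definition kappa_subset (R : A -> Prop) : Prop :=
  forall a : A,
    (exists X, cofinal_in (down R a) X /\ small ltK X) /\
    (exists X, coinitial_in (up R a) X /\ small ltK X).

(* a (partial) play: x alpha = move of I at stage alpha, y alpha = move of II *)
Definition trunc (alpha : K) (z : K -> A -> Prop) : K -> A -> Prop :=
  fun nu a => ltK nu alpha /\ z nu a.

Definition union_below (alpha : K) (y : K -> A -> Prop) : A -> Prop :=
  fun a => exists nu, ltK nu alpha /\ y nu a.

Definition legalI (x y : K -> A -> Prop) (alpha : K) : Prop :=
  small ltK (x alpha) /\ (forall a, union_below alpha y a -> x alpha a).

Definition legalII (x y : K -> A -> Prop) (alpha : K) : Prop :=
  small ltK (y alpha) /\ (forall a, x alpha a -> y alpha a).

Definition play_result (x : K -> A -> Prop) : A -> Prop :=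
  fun a => exists alpha, x alpha a.

(* Strategy of I: from the history (moves strictly before alpha) to x_alpha. *)
Definition strategyI := K -> (K -> A -> Prop) -> (K -> A -> Prop) -> (A -> Prop).
(* Strategy of II: from the history and the current move x_alpha to y_alpha. *)
Definition strategyII :=
  K -> (K -> A -> Prop) -> (K -> A -> Prop) -> (A -> Prop) -> (A -> Prop).

Definition follows_I (s : strategyI) (x y : K -> A -> Prop) : Prop :=
  forall alpha, x alpha = s alpha (trunc alpha x) (trunc alpha y).

Definition follows_II (t : strategyII) (x y : K -> A -> Prop) : Prop :=
  forall alpha, y alpha = t alpha (trunc alpha x) (trunc alpha y) (x alpha).

(* I wins a play if II breaks a rule first, or all moves are legal and the
   result is not a kappa-subset. *)
Definition winning_I (s : strategyI) : Prop :=
  forall x y, follows_I s x y ->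
    (forall alpha, (forall beta, ltK beta alpha -> legalII x y beta) ->
                   legalI x y alpha) /\
    ((forall alpha, legalII x y alpha) -> ~ kappa_subset (play_result x)).

(* II wins a play if I breaks a rule first, or all moves are legal and the
   result is a kappa-subset. *)
Definition winning_II (t : strategyII) : Prop :=
  forall x y, follows_II t x y ->
    (forall alpha, (forall beta, ltK beta alpha -> legalI x y beta) ->
                   legalI x y alpha -> legalII x y alpha) /\
    ((forall alpha, legalI x y alpha) -> kappa_subset (play_result x)).

Definition I_has_winning_strategy : Prop := exists s, winning_I s.
Definition II_has_winning_strategy : Prop := exists t, winning_II t.
Definition determined : Prop := I_has_winning_strategy \/ II_has_winning_strategy.

End Orders.

(* Main.v *)
Require Import Defs.
From Stdlib Require Import Classical ClassicalEpsilon FunctionalExtensionality PropExtensionality.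

Definition choose {A} (P : A -> Prop) (d : A) : A :=
  match excluded_middle_informative (exists a, P a) with
  | left H => proj1_sig (constructive_indefinite_description P H)
  | right _ => d end.

Lemma choose_spec A (P : A -> Prop) d : (exists a, P a) -> P (choose P d).
Proof.
  intros H. unfold choose. destruct (excluded_middle_informative _) as [H'|H'].
  - exact (proj2_sig (constructive_indefinite_description P H')).
  - contradiction.
Qed.
Arguments choose_spec {A P d} _.

Section Basic.
Variables (K : Type) (ltK : K -> K -> Prop).
Hypothesis irr : forall a, ~ ltK a a.
Hypothesis tr : forall a b c, ltK a b -> ltK b c -> ltK a c.
Hypothesis tri : forall a b, ltK a b \/ a = b \/ ltK b a.
Hypothesis reg : forall S : K -> Prop, small ltK S -> exists alpha, forall beta, S beta -> ltK beta alpha.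

Lemma three : ~ (exists f : K -> nat, forall a b, f a = f b -> a = b) ->
  exists z w a0, ltK z w /\ ltK w a0.
Proof.
  intros nf. apply NNPP; intros H. apply nf.
  exists (fun k => if excluded_middle_informative (exists j, ltK j k) then 1 else 0).
  intros a b.
  destruct (excluded_middle_informative (exists j, ltK j a)) as [[ja Ha]|Ha];
  destruct (excluded_middle_informative (exists j, ltK j b)) as [[jb Hb]|Hb];
  intros E; try discriminate.
  - destruct (tri a b) as [L|[L|L]]; auto.
    + exfalso; apply H; exists ja, a, b; auto.
    + exfalso; apply H; exists jb, b, a; auto.
  - destruct (tri a b) as [L|[L|L]]; auto.
    + exfalso; apply Hb; eauto.
    + exfalso; apply Ha; eauto.
Qed.

Lemma small_bounded (S : K -> Prop) al : (forall k, S k -> ltK k al) -> small ltK S.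
Proof. intros H. exists al, (fun k => k). split; auto. Qed.

Lemma small_sub A (S T : A -> Prop) : small ltK S -> (forall a, T a -> S a) -> small ltK T.
Proof. intros [al [f [Hi Hb]]] H. exists al, f. split; auto. Qed.

Lemma small_image A B (S : A -> Prop) (F : A -> B) (T : B -> Prop) :
  small ltK S -> (forall b, T b -> exists a, S a /\ F a = b) -> small ltK T.
Proof.
  intros [al [f [Hi Hb]]] H.
  set (g := fun b => choose (fun k => exists a, S a /\ F a = b /\ f a = k) al).
  assert (Hg : forall b, T b -> exists a, S a /\ F a = b /\ f a = g b).
  { intros b Tb. apply (choose_spec (P := fun k => exists a, S a /\ F a = b /\ f a = k)).
    destruct (H b Tb) as [a [Sa Fa]]. exists (f a), a; auto. }
  exists al, g. split.
  - intros b b' Tb Tb' E.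
    destruct (Hg b Tb) as [a [Sa [Fa fa]]]. destruct (Hg b' Tb') as [a' [Sa' [Fa' fa']]].
    rewrite <- fa, <- fa' in E. rewrite <- Fa, <- Fa'. f_equal. auto.
  - intros b Tb. destruct (Hg b Tb) as [a [Sa [Fa fa]]]. rewrite <- fa. auto.
Qed.
Arguments small_image {A B S F T} _ _.

Variables (z w a0 : K).
Hypothesis zw : ltK z w.
Hypothesis wa : ltK w a0.
Variable e : K -> (K -> K) -> K.
Hypothesis He : forall alpha alpha' f f', e alpha f = e alpha' f' ->
      alpha = alpha' /\ (forall beta, ltK beta alpha -> f beta = f' beta).

Definition pr (a b : K) : K := e a0 (fun d => if excluded_middle_informative (d = z) then a else b).

Lemma pr_inj a b a' b' : pr a b = pr a' b' -> a = a' /\ b = b'.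
Proof.
  unfold pr; intro H; apply He in H; destruct H as [_ H]. split.
  - specialize (H z (tr _ _ _ zw wa)).
    destruct (excluded_middle_informative (z = z)); [exact H| congruence].
  - specialize (H w wa). destruct (excluded_middle_informative (w = z)) as [E|]; [|exact H].
    rewrite E in zw; exfalso; exact (irr _ zw).
Qed.

Lemma small_union I A (J : I -> Prop) (S : I -> A -> Prop) : small ltK J ->
  (forall i, J i -> small ltK (S i)) -> small ltK (fun a => exists i, J i /\ S i a).
Proof.
  intros HJ HS.
  destruct (classic (inhabited I)) as [[i0]|nI].
  2: { exists z, (fun _ => z). split.
       - intros x y [i _]; exfalso; apply nI; exact (inhabits i).
       - intros x [i _]; exfalso; apply nI; exact (inhabits i). }
  destruct HJ as [aJ [gJ [HgJ HbJ]]].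
  set (fs := fun i => choose (fun f : A -> K => forall x y, S i x -> S i y -> f x = f y -> x = y) (fun _ => z)).
  assert (Hfs : forall i, J i -> forall x y, S i x -> S i y -> fs i x = fs i y -> x = y).
  { intros i Ji. apply (choose_spec (P := fun f : A -> K => forall x y, S i x -> S i y -> f x = f y -> x = y)).
    destruct (HS i Ji) as [_ [f [Hf _]]]. exists f; exact Hf. }
  set (ia := fun a => choose (fun i => J i /\ S i a) i0).
  assert (Hia : forall a, (exists i, J i /\ S i a) -> J (ia a) /\ S (ia a) a).
  { intros a H; apply (choose_spec (P := fun i => J i /\ S i a)); exact H. }
  set (h := fun a => pr (gJ (ia a)) (fs (ia a) a)).
  set (Hi := fun i k => exists a, (exists j, J j /\ S j a) /\ ia a = i /\ h a = k).
  assert (HiS : forall i, J i -> small ltK (Hi i)).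
  { intros i Ji. apply (small_image (S := S i) (F := h)). exact (HS i Ji).
    intros k [a [U [E Hk]]]. exists a. split; [ rewrite <- E; apply Hia; exact U | exact Hk]. }
  set (bnd := fun i => choose (fun b => forall k, Hi i k -> ltK k b) z).
  assert (Hbnd : forall i, J i -> forall k, Hi i k -> ltK k (bnd i)).
  { intros i Ji. apply (choose_spec (P := fun b => forall k, Hi i k -> ltK k b)).
    apply reg. apply HiS; exact Ji. }
  destruct (reg (fun b => exists i, J i /\ bnd i = b)) as [bs Hbs].
  { apply (small_image (S := J) (F := bnd)). exists aJ, gJ; split; assumption.
    intros b [i [Ji E]]; exists i; split; assumption. }
  exists bs, h. split.
  - intros x y Ux Uy E. unfold h in E. apply pr_inj in E. destruct E as [E1 E2].
    destruct (Hia x Ux) as [Jx Sx]; destruct (Hia y Uy) as [Jy Sy].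
    assert (Eq : ia x = ia y) by (apply HgJ; assumption).
    rewrite Eq in E2, Sx. apply (Hfs (ia y) Jy); assumption.
  - intros x Ux. destruct (Hia x Ux) as [Jx Sx]. apply tr with (bnd (ia x)).
    + apply Hbnd; [exact Jx|]. exists x; auto.
    + apply Hbs. exists (ia x); auto.
Qed.

Lemma small_union2 A (S T : A -> Prop) : small ltK S -> small ltK T -> small ltK (fun a => S a \/ T a).
Proof.
  intros HS HT.
  apply small_sub with (S := fun a => exists b : bool, True /\ (if b then S a else T a)).
  - apply small_union.
    + exists a0, (fun b : bool => if b then z else w). split.
      * intros [] [] _ _ E; auto; rewrite E in zw; exfalso; exact (irr _ zw).
      * intros [] _; auto. eapply tr; eauto.
    + intros [] _; auto.
  - intros a [H|H]; [exists true|exists false]; auto.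
Qed.

Lemma small_single A (c : A) : small ltK (fun a => a = c).
Proof. exists w, (fun _ => z). split; auto. intros x y -> -> _; auto. Qed.

Lemma no_max (k : K) : exists al, ltK k al.
Proof. destruct (reg (fun a => a = k)) as [al H]. apply small_single. eauto. Qed.

Lemma enc (S : K -> Prop) : small ltK S -> exists t1, forall s,
  (exists al h, e al h = t1 /\ exists d, ltK d al /\ h d = pr w s) <-> S s.
Proof.
  intros [al [f [Hf Hb]]].
  set (h := fun d => if excluded_middle_informative (exists s, S s /\ f s = d)
                     then pr w (choose (fun s => S s /\ f s = d) z) else pr z z).
  exists (e al h). intros s. split.
  - intros [al' [h' [E [d [Hd Hh]]]]]. apply He in E. destruct E as [<- E].
    rewrite E in Hh by exact Hd. unfold h in Hh.
    destruct (excluded_middle_informative _) as [Ex|Ex].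
    + apply pr_inj in Hh. destruct Hh as [_ <-].
      exact (proj1 (choose_spec (P := fun s => S s /\ f s = d) (d := z) Ex)).
    + apply pr_inj in Hh. destruct Hh as [Ezw _]. rewrite Ezw in zw. exfalso; exact (irr _ zw).
  - intros Ss. exists al, h. split; [reflexivity|]. exists (f s). split; [auto|].
    unfold h. destruct (excluded_middle_informative _) as [Ex|Ex].
    + destruct (choose_spec (P := fun s' => S s' /\ f s' = f s) (d := z) Ex) as [S1 E1].
      f_equal. apply Hf; auto.
    + exfalso; apply Ex; eauto.
Qed.

Section Game.
Variables (L : Type) (leL : L -> L -> Prop).
Hypothesis lrefl : forall x, leL x x.
Hypothesis lanti : forall x y, leL x y -> leL y x -> x = y.
Hypothesis ltot : forall x y, leL x y \/ leL y x.

Definition ltL a b := leL a b /\ a <> b.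

Definition inj (S : L -> Prop) : L -> K :=
  choose (fun f : L -> K => forall x y, S x -> S y -> f x = f y -> x = y) (fun _ => z).

Lemma inj_spec S : small ltK S -> forall x y, S x -> S y -> inj S x = inj S y -> x = y.
Proof.
  intros [al [f [Hf _]]]. apply (choose_spec (P := fun f : L -> K => forall x y, S x -> S y -> f x = f y -> x = y)).
  eauto.
Qed.

Definition DecSet (t s : K) := exists al h, e al h = t /\ exists d, ltK d al /\ h d = pr w s.
Definition Xset (yh : K -> L -> Prop) t1 b := exists be, yh be b /\ DecSet t1 (pr be (inj (yh be) b)).
Definition Gs yh t c := exists t1 t2, t = pr t1 t2 /\ (forall x, Xset yh t1 x -> ltL x c) /\
   (forall y, Xset yh t2 y -> ltL c y).
Definition strat (l0 : L) : strategyI K L := fun g xh yh a =>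
  (exists nu, yh nu a) \/ (exists t, ltK t g /\ Gs yh t a /\ a = choose (Gs yh t) l0).

Lemma trunc_eq (g b : K) (y : K -> L -> Prop) : ltK b g -> trunc ltK g y b = y b.
Proof.
  intros H. apply functional_extensionality; intros a. apply propositional_extensionality.
  unfold trunc; tauto.
Qed.

Lemma part1 : ~ (exists f : L -> K, forall a b, f a = f b -> a = b) -> I_has_winning_strategy ltK leL.
Proof.
  intros nI.
  destruct (classic (inhabited L)) as [[l0]|nL].
  2: { exfalso; apply nI. exists (fun a => match nL (inhabits a) with end).
       intros a; destruct (nL (inhabits a)). }
  exists (strat l0). intros x y Hf. split.
  - intros g Hleg. split.
    + rewrite Hf. unfold strat. apply small_union2.
      * apply small_union with (J := fun nu => ltK nu g) (S := y).
        -- apply small_bounded with g; auto.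
        -- intros i Hi. exact (proj1 (Hleg i Hi)).
      * apply (small_image (S := fun t => ltK t g) (F := fun t => choose (Gs (trunc ltK g y) t) l0)).
        -- apply small_bounded with g; auto.
        -- intros b [t [Ht [_ Eb]]]. exists t; auto.
    + intros a Ha. rewrite Hf. left. exact Ha.
  - intros Hleg HR.
    set (R := play_result x) in *.
    assert (RinY : forall a, R a -> exists be, y be a).
    { intros a [al Ha]. exists al. apply (Hleg al). exact Ha. }
    set (bx := fun a => choose (fun be => y be a) z).
    assert (Hbx : forall a, R a -> y (bx a) a).
    { intros a Ra. apply (choose_spec (P := fun be => y be a)). auto. }
    set (code := fun a => pr (bx a) (inj (y (bx a)) a)).
    assert (Hcode : forall a b, R a -> R b -> code a = code b -> a = b).
    { intros a b Ra Rb E. apply pr_inj in E. destruct E as [E1 E2].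
      rewrite <- E1 in E2. apply (inj_spec (y (bx a)) (proj1 (Hleg _)) a b (Hbx a Ra)); [|exact E2].
      rewrite E1; apply Hbx; auto. }
    assert (All : forall a, R a).
    { intros a. apply NNPP; intros nRa.
      destruct (HR a) as [[X [[HX1 HX2] HXs]] [Y [[HY1 HY2] HYs]]].
      destruct (enc (fun s => exists x, X x /\ code x = s)) as [t1 Ht1].
      { apply (small_image (S := X) (F := code)); auto. }
      destruct (enc (fun s => exists x, Y x /\ code x = s)) as [t2 Ht2].
      { apply (small_image (S := Y) (F := code)); auto. }
      set (t := pr t1 t2).
      destruct (reg (fun k => k = t \/ exists x, (X x \/ Y x) /\ bx x = k)) as [g Hg].
      { apply small_union2. apply small_single.
        apply (small_image (S := fun x => X x \/ Y x) (F := bx)).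
        - apply small_union2; auto.
        - intros b [x0 [Hx Ex]]; eauto. }
      assert (XR : forall x, X x \/ Y x -> R x).
      { intros x0 [Hx|Hx]; [apply (HX1 x0 Hx) | apply (HY1 x0 Hx)]. }
      assert (Xeq : forall (Z : L -> Prop) t0, (forall x, Z x -> X x \/ Y x) ->
          (forall s, (exists al h, e al h = t0 /\ exists d, ltK d al /\ h d = pr w s) <-> exists x, Z x /\ code x = s) ->
          forall b, Xset (trunc ltK g y) t0 b <-> Z b).
      { intros Z t0 HZ Ht0 b. split.
        - intros [be [[Hbe Yb] HD]]. rewrite trunc_eq in HD by exact Hbe.
          apply Ht0 in HD. destruct HD as [x0 [Zx Ex]].
          unfold code in Ex. apply pr_inj in Ex. destruct Ex as [E1 E2].
          rewrite E1 in E2.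
          assert (x0 = b) as <-; [|exact Zx].
          apply (inj_spec (y be)); auto.
          + exact (proj1 (Hleg _)).
          + rewrite <- E1. apply Hbx; auto.
        - intros Zb. exists (bx b). assert (ltK (bx b) g) as Hlt.
          { apply Hg. right. exists b; auto. }
          split.
          + split; [exact Hlt| apply Hbx; auto].
          + rewrite trunc_eq by exact Hlt. apply Ht0. exists b; auto. }
      assert (EX := Xeq X t1 (fun x0 H => or_introl H) Ht1).
      assert (EY := Xeq Y t2 (fun x0 H => or_intror H) Ht2).
      assert (Ga : Gs (trunc ltK g y) t a).
      { exists t1, t2. split; [reflexivity|]. split.
        - intros b Hb. apply EX in Hb. destruct (HX1 b Hb) as [Rb Lb]. split; auto.
          intros ->; auto.
        - intros b Hb. apply EY in Hb. destruct (HY1 b Hb) as [Rb Lb]. split; auto.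
          intros <-; auto. }
      set (c := choose (Gs (trunc ltK g y) t) l0).
      assert (Gc : Gs (trunc ltK g y) t c) by (apply choose_spec; eauto).
      assert (Rc : R c).
      { exists g. rewrite Hf. right. exists t. split; [apply Hg; auto|]. split; auto. }
      destruct Gc as [t1' [t2' [Et [G1 G2]]]].
      unfold t in Et. apply pr_inj in Et. destruct Et as [<- <-].
      destruct (ltot c a) as [Hca|Hac].
      - destruct (HX2 c (conj Rc Hca)) as [x0 [Xx Lx]].
        destruct (G1 x0) as [L1 N1]. apply EX; auto.
        apply N1. apply lanti; auto.
      - destruct (HY2 c (conj Rc Hac)) as [x0 [Xx Lx]].
        destruct (G2 x0) as [L1 N1]. apply EY; auto.
        apply N1. apply lanti; auto. }
    apply nI. exists code. intros a b. apply Hcode; auto.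
Qed.
Lemma part2 (f : L -> K) : (forall a b, f a = f b -> a = b) -> II_has_winning_strategy ltK leL.
Proof.
  intros Hfi. exists (fun al _ _ xa => fun a => xa a \/ f a = al).
  intros x y Hf. split.
  - intros al _ [Hs _]. split.
    + rewrite Hf. apply small_union2; auto.
      destruct (no_max al) as [b Hb].
      exists b, f. split; auto. intros a Ha; rewrite Ha; exact Hb.
    + intros a Ha. rewrite Hf. left; exact Ha.
  - intros HI.
    assert (All : forall a, play_result x a).
    { intros a. destruct (no_max (f a)) as [b Hb]. exists b.
      apply (proj2 (HI b)). exists (f a). split; auto. rewrite Hf. right; reflexivity. }
    intros a. split.
    + exists (fun b => b = a). split; [split|].
      * intros b ->. split; auto.
      * intros b [_ Hb]. exists a; auto.
      * apply small_single.
    + exists (fun b => b = a). split; [split|].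
      * intros b ->. split; auto.
      * intros b [_ Hb]. exists a; auto.
      * apply small_single.
Qed.
End Game.
End Basic.

Theorem proposition2 (K : Type) (ltK : K -> K -> Prop)
  (Hk : regular_uncountable_cardinal ltK)
  (Hpow : kappa_lt_kappa_eq_kappa ltK) :
  (forall (L : Type) (leL : L -> L -> Prop),
      linear_order leL ->
      (* |L| > kappa *)
      ~ (exists f : L -> K, forall a b, f a = f b -> a = b) ->
      I_has_winning_strategy ltK leL) /\
  (forall (L : Type) (leL : L -> L -> Prop),
      linear_order leL -> determined ltK leL).
Proof.
  destruct Hk as [[irr [tr [tri _]]] [_ [unc reg]]].
  destruct Hpow as [e He].
  destruct (three K ltK tri unc) as [z [w [a0 [zw wa]]]].
  assert (P1 : forall (L : Type) (leL : L -> L -> Prop),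
      linear_order leL ->
      ~ (exists f : L -> K, forall a b, f a = f b -> a = b) ->
      I_has_winning_strategy ltK leL).
  { intros L leL [lr [la [_ lt]]]. exact (part1 K ltK irr tr reg z w a0 zw wa e He L leL lr la lt). }
  split; [exact P1|].
  intros L leL HL.
  destruct (classic (exists f : L -> K, forall a b, f a = f b -> a = b)) as [[f Hf]|nf].
  - right. destruct HL as [lr [la [_ lt]]]. exact (part2 K ltK irr tr reg z w a0 zw wa e He L leL lr f Hf).
  - left. apply P1; auto.
Qed.
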